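(* Let $A$ be a $\mathbb{Z}$-module and let $S'\subset S\subset\mathbb{N}$. Suppose that for each $n\in S$ there is a finite sequence $n'=n_0\Leftrightarrow_A n_1\Leftrightarrow_A\cdots\Leftrightarrow_A n_r=n$ ($r\ge0$) of elements of $S$ with $n'\in S'$. Then the homomorphism $\rho^A_{S,S'}\colon A[q]^S\to A[q]^{S'}$ induced by the identity of $A[q]$ is injective.
   Context: $q$ is an indeterminate; $A[q]$ is the $\mathbb{Z}[q]$-module of polynomials in $q$ with coefficients in $A$. For $n\in\mathbb{N}$, $\Phi_n(q)$ is the $n$th cyclotomic polynomial; for $S\subset\mathbb{N}$, $\Phi_S^*$ is the multiplicative subset of $\mathbb{Z}[q]$ generated by $\{\Phi_m(q):m\in S\}$, directed by divisibility, and $A[q]^S=\varprojlim_{f\in\Phi_S^*}A[q]/fA[q]$. $A$ is $p$-adically separated if $\bigcap_{j\ge0}p^jA=0$. For $m,n\in\mathbb{N}$ write $m\Leftrightarrow_A n$ if $m=n$, or $A=0$, or $m/n$ is an integer power (positive or negative exponent) of a prime $p$ such that $A$ is $p$-adically separated. *)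

(* Defs.v *)
From HB Require Import structures.
From mathcomp Require Import all_boot all_order all_algebra all_field.
Set Implicit Arguments. Unset Strict Implicit. Unset Printing Implicit Defensive.
Import Order.TTheory GRing.Theory Num.Theory.
Local Open Scope ring_scope.

(* A[q] for a Z-module A (zmodType) is represented by coefficient sequences
   p : seq A (p`_k is the coefficient of q^k; trailing zeros irrelevant).
   Z[q] = {poly int} acts on A[q] by Cauchy product. *)

Definition polyA_eqmod (A : zmodType) (f : {poly int}) (p p' : seq A) : Prop :=
  exists r : seq A, forall k : nat,
    p`_k - p'`_k = \sum_(i < k.+1) r`_(k - i) *~ f`_i.

Definition PhiStar (S : nat -> Prop) (f : {poly int}) : Prop :=
  exists s : seq nat, (forall m, m \in s -> S m) /\ f = \prod_(m <- s) 'Phi_m.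

(* An element of A[q]^S = lim_{f in Phi_S^*} A[q]/fA[q], given by
   representatives x f in A[q] compatible along divisibility f | g. *)
Definition limit_elt (A : zmodType) (S : nat -> Prop)
    (x : {poly int} -> seq A) : Prop :=
  forall f g : {poly int}, PhiStar S f -> PhiStar S g ->
    (exists h : {poly int}, g = h * f) -> polyA_eqmod f (x g) (x f).

Definition padic_separated (A : zmodType) (p : nat) : Prop :=
  forall a : A, (forall j : nat, exists b : A, a = b *+ (p ^ j)%N) -> a = 0.

Definition equivA (A : zmodType) (m n : nat) : Prop :=
  m = n \/ (forall a : A, a = 0) \/
  exists p k : nat, prime p /\ padic_separated A p /\
    (m = (n * p ^ k)%N \/ n = (m * p ^ k)%N).

Definition chain_condition (A : zmodType) (S S' : nat -> Prop) : Prop :=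
  forall n, S n -> exists (r : nat) (c : nat -> nat),
    [/\ S' (c 0%N), c r = n, (forall i, (i <= r)%N -> S (c i)) &
        (forall i, (i < r)%N -> equivA A (c i) (c i.+1))].

(* Main.v *)
From HB Require Import structures.
From mathcomp Require Import all_boot all_order all_algebra all_field zify ring.
Require Import Defs.
Set Implicit Arguments. Unset Strict Implicit. Unset Printing Implicit Defensive.
Import Order.TTheory GRing.Theory Num.Theory.
Local Open Scope ring_scope.


Lemma dvd_split p m i x : prime p -> coprime p m -> (0 < m)%N ->
  (x %| m * p ^ i.+1)%N -> ~~ (x %| m * p ^ i)%N -> exists2 d, (d %| m)%N & x = (d * p ^ i.+1)%N.
Proof.
move=> pp cpm m0 hx hnx.
have p1 : (1 < p)%N by apply: prime_gt1.
have x0 : (0 < x)%N.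
  by apply: (dvdn_gt0 _ hx); rewrite muln_gt0 m0 expn_gt0 ltnW.
have [y cpy ex] := pfactor_coprime pp x0.
move: ex hx hnx; set l := logn p x => ex hx hnx.
have ym : (y %| m)%N.
  rewrite -(@Gauss_dvdl _ _ (p ^ i.+1)); last by rewrite coprime_sym coprimeXl.
  by apply: dvdn_trans hx; rewrite ex dvdn_mulr.
have hl : (l <= i.+1)%N.
  rewrite -(dvdn_Pexp2l _ _ p1) -(@Gauss_dvdr _ m); last by rewrite coprimeXl.
  by apply: dvdn_trans hx; rewrite ex dvdn_mull.
case: (ltnP l i.+1) => hl2.
  by exfalso; move/negP: hnx; apply; rewrite ex dvdn_mul // (dvdn_Pexp2l _ _ p1) -ltnS.
exists y => //; rewrite ex; congr (_ * p ^ _)%N; apply/eqP; by rewrite eqn_leq hl hl2.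
Qed.

Lemma divisors_step p m i : prime p -> coprime p m -> (0 < m)%N ->
  perm_eq (divisors (m * p ^ i.+1)) (divisors (m * p ^ i) ++ [seq (d * p ^ i.+1)%N | d <- divisors m]).
Proof.
move=> pp cpm m0.
have p0 : (0 < p)%N by apply: prime_gt0.
have pk0 k : (0 < p ^ k)%N by rewrite expn_gt0 p0.
have mp0 k : (0 < m * p ^ k)%N by rewrite muln_gt0 m0 pk0.
apply: uniq_perm; first exact: divisors_uniq.
  rewrite cat_uniq divisors_uniq map_inj_uniq ?divisors_uniq ?andbT; last first.
    by move=> a b /eqP; rewrite eqn_pmul2r // => /eqP.
  apply/hasPn => z /mapP [d hd ->]; rewrite -dvdn_divisors //.
  apply/negP => /(dvdn_trans (dvdn_mull d (dvdnn _))).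
  rewrite (@Gauss_dvdr _ m); last by rewrite coprimeXl.
  by rewrite dvdn_Pexp2l ?ltnn // prime_gt1.
move=> x; rewrite mem_cat -!dvdn_divisors //.
apply/idP/orP.
  move=> hx; case hxi: (x %| m * p ^ i)%N; first by left.
  right; have [d hd ->] := dvd_split pp cpm m0 hx (negbT hxi).
  by apply/mapP; exists d => //; rewrite -dvdn_divisors.
case=> [hx | /mapP [d hd ->]].
  by apply: dvdn_trans hx _; rewrite expnS mulnCA dvdn_mull.
by apply: dvdn_mul => //; rewrite dvdn_divisors.
Qed.

Lemma prod_div_split (R : comNzRingType) (F : nat -> R) p m i : prime p -> coprime p m -> (0 < m)%N ->
  \prod_(d <- divisors (m * p ^ i)) F d = \prod_(d <- divisors m) \prod_(l < i.+1) F (d * p ^ l)%N.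
Proof.
move=> pp cpm m0; elim: i => [|i IH].
  by rewrite expn0 muln1; apply: eq_bigr => d _; rewrite big_ord1 expn0 muln1.
rewrite (perm_big _ (divisors_step i pp cpm m0)) big_cat /= IH big_map -big_split /=.
by apply: eq_bigr => d _; rewrite [in RHS]big_ord_recr.
Qed.


Section NT.
Variable p : nat.
Hypothesis pp : prime p.
Local Notation Fp := 'F_p.
Definition phi (d : nat) : {poly Fp} := map_poly (intr : int -> Fp) 'Phi_d.

Lemma phi_monic d : phi d \is monic.
Proof. by apply: monic_map; apply: Cyclotomic_monic. Qed.
Lemma phi_neq0 d : phi d != 0.
Proof. exact: monic_neq0 (phi_monic d). Qed.

Lemma prod_phi n : (0 < n)%N -> \prod_(d <- divisors n) phi d = 'X^n - 1.
Proof.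
move=> n0; rewrite /phi -rmorph_prod /=.
by rewrite prod_Cyclotomic // rmorphB /= map_polyXn rmorph1.
Qed.

Lemma frob_Xn m i : ('X^m - 1 : {poly Fp}) ^+ (p ^ i) = 'X^(m * p ^ i) - 1.
Proof.
have hc : p \in [pchar {poly Fp}] by rewrite pchar_poly pchar_Fp.
have hn : ([pchar {poly Fp}]).-nat (p ^ i)%N.
  by rewrite (eq_pnat _ (pcharf_eq hc)) pnatX pnat_id.
by rewrite exprDn_pchar // exprNn_pchar // expr1n -exprM.
Qed.

Lemma NT1 m : (0 < m)%N -> coprime p m -> forall i,
  \prod_(l < i.+1) phi (m * p ^ l)%N = phi m ^+ (p ^ i).
Proof.
move: m; elim/ltn_ind => m IH m0 cpm i.
have E := prod_div_split phi i pp cpm m0.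
rewrite prod_phi ?muln_gt0 ?m0 ?expn_gt0 ?prime_gt0 // -frob_Xn -prod_phi // in E.
rewrite -prodrXl in E.
rewrite (bigD1_seq m) ?divisors_id ?divisors_uniq //= in E.
rewrite [in RHS](bigD1_seq m) ?divisors_id ?divisors_uniq //= in E.
have Erest : \prod_(d <- divisors m | d != m) \prod_(l < i.+1) phi (d * p ^ l)%N =
             \prod_(d <- divisors m | d != m) phi d ^+ (p ^ i).
  rewrite big_seq_cond [RHS]big_seq_cond; apply: eq_bigr => d /andP [hd hdm].
  move: hd; rewrite -dvdn_divisors // => hd.
  have d0 : (0 < d)%N by apply: dvdn_gt0 hd.
  apply: IH => //; last by apply: coprime_dvdr hd cpm.
  by rewrite ltn_neqAle hdm dvdn_leq.
rewrite Erest in E.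
apply: (mulIf _ (esym E)).
rewrite prodrXl expf_neq0 //.
by elim/big_rec: _ => [|d y _ hy]; rewrite ?oner_neq0 // mulf_neq0 ?phi_neq0.
Qed.

Lemma NT2 m v : (0 < m)%N -> coprime p m -> exists2 c, (0 < c)%N & phi (m * p ^ v)%N = phi m ^+ c.
Proof.
move=> m0 cpm; case: v => [|k].
  by exists 1%N => //; rewrite expn0 muln1 expr1.
have E1 := NT1 m0 cpm k.+1; have E0 := NT1 m0 cpm k.
rewrite big_ord_recr /= E0 in E1.
have p1 : (1 < p)%N by apply: prime_gt1.
have t0 : (0 < p ^ k)%N by rewrite expn_gt0 ltnW.
exists (p ^ k.+1 - p ^ k)%N; first by rewrite expnS; move: (p ^ k)%N t0 => t t0; nia.
apply: (mulfI (expf_neq0 (p ^ k)%N (phi_neq0 m))).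
rewrite E1 -exprD; congr (_ ^+ _).
by rewrite expnS; move: (p ^ k)%N t0 => t t0; nia.
Qed.

Lemma NT3 n n' k : (0 < n')%N -> n = (n' * p ^ k)%N ->
  exists a b, [/\ (0 < a)%N, (0 < b)%N & phi n ^+ a = phi n' ^+ b].
Proof.
move=> n0 ->; have [m cpm e] := pfactor_coprime pp n0.
have m0 : (0 < m)%N by move: n0; rewrite e muln_gt0 => /andP [].
have [c1 c10 E1] := NT2 (logn p n' + k) m0 cpm.
have [c2 c20 E2] := NT2 (logn p n') m0 cpm.
exists c2, c1; split => //.
by rewrite {1}e -mulnA -expnD E1 {1}e E2 -!exprM mulnC.
Qed.

Lemma lift0 (u : {poly int}) : map_poly (intr : int -> Fp) u = 0 -> exists h, u = h * p%:R.
Proof.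
move=> hu; exists (\poly_(i < size u) ((u`_i) %/ p)%Z).
apply/polyP => i; rewrite mulr_natr coefMn coef_poly.
case: ltnP => hi; last by rewrite nth_default // mul0rn.
have : (p %| u`_i)%Z.
  have := congr1 (fun P : {poly Fp} => P`_i) hu; rewrite coef_map coef0 /=.
  case: (u`_i) => n /=.
    by move/eqP; rewrite -(dvdn_pcharf (pchar_Fp pp)).
  by rewrite NegzE mulrNz => /eqP; rewrite oppr_eq0 -(dvdn_pcharf (pchar_Fp pp)).
move/divzK => {1}<-.
by rewrite -mulr_natr natz.
Qed.
End NT.

Lemma binom_ideal (R : comNzRingType) (Y Z : R) n : forall N1 N2, (N1 + N2)%N = n ->
  exists s t, (Y + Z) ^+ n = s * Y ^+ N1 + t * Z ^+ N2.
Proof.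
elim: n => [|n IH] N1 N2.
  by move=> /eqP; rewrite addn_eq0 => /andP [/eqP -> /eqP ->]; exists 1, 0; rewrite !expr0 mul0r addr0 mulr1.
case: N1 => [|a].
  by move=> _; exists ((Y + Z) ^+ n.+1), 0; rewrite expr0 mulr1 mul0r addr0.
case: N2 => [|b].
  by move=> _; exists 0, ((Y + Z) ^+ n.+1); rewrite expr0 mulr1 mul0r add0r.
move=> e.
have [s1 [t1 E1]] := IH a b.+1 (ltac:(lia)).
have [s2 [t2 E2]] := IH a.+1 b (ltac:(lia)).
exists (s1 + Z * s2), (Y * t1 + t2).
rewrite exprS mulrDl {1}E1 E2 !exprS.
ring.
Qed.

Lemma KeyNT p n n' k : prime p -> (0 < n)%N -> (0 < n')%N ->
  (n = (n' * p ^ k)%N \/ n' = (n * p ^ k)%N) -> forall e j,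
  exists M s t, 'Phi_n' ^+ M = s * 'Phi_n ^+ e + t * (p ^ j)%N%:R.
Proof.
move=> pp n0 n'0 hnn e j.
have [a [b [a0 b0 Eab]]] : exists a b, [/\ (0 < a)%N, (0 < b)%N & phi p n ^+ a = phi p n' ^+ b].
  case: hnn => h; first exact (NT3 pp n'0 h).
  by have [a [b [a0 b0 E]]] := NT3 pp n0 h; exists b, a; split.
have hu : map_poly (intr : int -> 'F_p) ('Phi_n' ^+ b - 'Phi_n ^+ a) = 0.
  by rewrite rmorphB !rmorphXn /= -/(phi p n) -/(phi p n') Eab subrr.
have [h Eh] := lift0 pp hu.
have Eb : 'Phi_n' ^+ b = 'Phi_n ^+ a + h * p%:R by rewrite -Eh addrC subrK.
have [s [t E]] := binom_ideal ('Phi_n ^+ a) (h * p%:R) (erefl (e + j)%N).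
case: a a0 Eab hu Eh Eb E => // a' _ _ _ _ Eb E.
exists (b * (e + j))%N, (s * ('Phi_n ^+ a') ^+ e), (t * h ^+ j).
rewrite exprM Eb E (exprS 'Phi_n a') !exprMn natrX.
ring.
Qed.


Section TX.
Variable A : zmodType.
Definition tx : Type := (int * A)%type.
HB.instance Definition _ := GRing.Zmodule.on tx.
Definition txmul (x y : tx) : tx := (x.1 * y.1, x.2 *~ y.1 + y.2 *~ x.1).
Definition txone : tx := (1, 0).
Lemma tx_eq (x y : tx) : x.1 = y.1 -> x.2 = y.2 -> x = y.
Proof. by case: x => a b; case: y => c d /= -> ->. Qed.
Lemma txmulA : associative txmul.
Proof.
move=> x y z; apply: tx_eq; rewrite /txmul /=; first by rewrite mulrA.
by rewrite !mulrzDl -!mulrzA addrA (mulrC z.1 x.1) (mulrC y.1 x.1).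
Qed.
Lemma txmulC : commutative txmul.
Proof. by move=> x y; apply: tx_eq; rewrite /txmul /= ?(mulrC x.1) // addrC. Qed.
Lemma txmul1 : left_id txone txmul.
Proof. by move=> x; apply: tx_eq; rewrite /txmul /= ?mul1r // mul0rz add0r mulr1z. Qed.
Lemma txmulDl : left_distributive txmul +%R.
Proof.
move=> x y z; apply: tx_eq; rewrite /txmul /=; first by rewrite mulrDl.
by rewrite mulrzDl mulrzDr !addrA (addrAC (x.2 *~ z.1)).
Qed.
Lemma txone_neq0 : txone != 0.
Proof. by apply/eqP => /(congr1 fst) /eqP; rewrite oner_eq0. Qed.
HB.instance Definition _ := GRing.Zmodule_isComNzRing.Build tx txmulA txmulC txmul1 txmulDl txone_neq0.

Lemma tx_mulE (x y : tx) : x * y = (x.1 * y.1, x.2 *~ y.1 + y.2 *~ x.1).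
Proof. by []. Qed.
Lemma tx_fst_sum I (r : seq I) (P : pred I) (F : I -> tx) : (\sum_(i <- r | P i) F i).1 = \sum_(i <- r | P i) (F i).1.
Proof. by elim/big_rec2: _ => // i a b _ <-. Qed.
Lemma tx_snd_sum I (r : seq I) (P : pred I) (F : I -> tx) : (\sum_(i <- r | P i) F i).2 = \sum_(i <- r | P i) (F i).2.
Proof. by elim/big_rec2: _ => // i a b _ <-. Qed.
Lemma tx_natmul (x : tx) n : x *+ n = (x.1 *+ n, x.2 *+ n).
Proof. elim: n => [|n IH]; first by apply: tx_eq. by rewrite !mulrS IH. Qed.
Lemma tx_intr (n : int) : (n%:~R : tx) = (n, 0).
Proof.
case: n => n; rewrite /intmul tx_natmul /= ?mul0rn.
  by apply: tx_eq => //=; rewrite natz.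
by apply: tx_eq => /=; rewrite ?oppr0 // NegzE natz.
Qed.
End TX.


Lemma int_sep (p : nat) (hp : (1 < p)%N) (c : int) :
  (forall j, exists b : int, c = b *+ (p ^ j)%N) -> c = 0.
Proof.
move=> H; have [b hb] := H `|c|%N.
have hk := ltn_expl `|c|%N hp.
move: hb; rewrite -mulr_natr.
move: (p ^ `|c|)%N hk => k hk hb.
have : (`|c| = `|b| * k)%N by rewrite hb abszM natz absz_nat.
move=> e; rewrite e in hk.
have: `|b|%N = 0%N by nia.
by move/eqP; rewrite absz_eq0 hb => /eqP ->; rewrite mul0r.
Qed.

Lemma sep_rem (A : zmodType) (p : nat) (hp : (1 < p)%N) (sepA : padic_separated A p)
  (F W : {poly tx A}) (mF : F \is monic)
  (H : forall j, exists u v, W = u * F + v * (p ^ j)%N%:R) : exists u, W = u * F.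
Proof.
exists (Pdiv.Ring.rdivp W F).
rewrite {1}(Pdiv.RingMonic.rdivp_eq mF W).
suff -> : Pdiv.Ring.rmodp W F = 0 by rewrite addr0.
apply/polyP => k; rewrite coef0.
have Hc : forall j, exists c : tx A, (Pdiv.Ring.rmodp W F)`_k = c *+ (p ^ j)%N.
  move=> j; have [u [v ->]] := H j.
  rewrite Pdiv.RingMonic.rmodpD // Pdiv.RingMonic.rmodp_mull // add0r.
  rewrite mulr_natr -scaler_nat Pdiv.RingMonic.rmodpZ // coefZ mulr_natl.
  by eexists.
apply: tx_eq.
  apply: (int_sep hp) => j; have [c ->] := Hc j.
  by exists c.1; rewrite tx_natmul.
apply: sepA => j; have [c ->] := Hc j.
by exists c.2; rewrite tx_natmul.
Qed.


Section Conv.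
Variable A : zmodType.
Definition iotaA (s : seq A) : {poly tx A} := Poly (map (fun a => ((0:int), a) : tx A) s).
Definition liftZ (f : {poly int}) : {poly tx A} := map_poly (intr : int -> tx A) f.

Lemma nth_map0 (T U : Type) (x0 : T) (y0 : U) (g : T -> U) (s : seq T) k :
  g x0 = y0 -> nth y0 (map g s) k = g (nth x0 s k).
Proof.
move=> e; case: (ltnP k (size s)) => hk; first by rewrite (nth_map x0).
by rewrite !nth_default ?size_map.
Qed.

Lemma coef_iotaA s k : (iotaA s)`_k = ((0:int), s`_k).
Proof. by rewrite coef_Poly (nth_map0 (x0:=0)). Qed.

Lemma coef_liftZ f k : (liftZ f)`_k = (f`_k, 0).
Proof. by rewrite coef_map /= tx_intr. Qed.

Lemma coef_liftZM f u k : (liftZ f * u)`_k =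
  (\sum_(i < k.+1) f`_i * (u`_(k - i)).1, \sum_(i < k.+1) (u`_(k - i)).2 *~ f`_i).
Proof.
rewrite coefM; apply: tx_eq; rewrite ?tx_fst_sum ?tx_snd_sum; apply: eq_bigr => i _;
  by rewrite coef_liftZ tx_mulE /= ?mul0rz ?add0r.
Qed.

Lemma eqmodE f p p' : polyA_eqmod f p p' <-> exists u, iotaA p - iotaA p' = liftZ f * u.
Proof.
split.
  move=> [r Hr]; exists (iotaA r); apply/polyP => k.
  rewrite coef_liftZM coefB !coef_iotaA; apply: tx_eq => /=.
    by rewrite subr0 big1 // => i _; rewrite coef_iotaA mulr0.
  by rewrite Hr; apply: eq_bigr => i _; rewrite coef_iotaA.
move=> [u Hu]; exists (map (fun c : tx A => c.2) u) => k.
have := congr1 (fun P : {poly tx A} => (P`_k).2) Hu.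
rewrite /= coef_liftZM coefB !coef_iotaA /= => ->.
by apply: eq_bigr => i _; rewrite (nth_map0 (x0:=0)).
Qed.
End Conv.


Section Main.
Variables (A : zmodType) (S S' : nat -> Prop).
Hypothesis HSpos : forall n, S n -> (0 < n)%N.
Hypothesis HS'S : forall n, S' n -> S n.
Variables x y : {poly int} -> seq A.
Hypothesis Hx : limit_elt S x.
Hypothesis Hy : limit_elt S y.

Definition Zd f := iotaA (x f) - iotaA (y f).
Definition Good f := exists u, Zd f = liftZ A f * u.

Lemma liftZM f g : liftZ A (f * g) = liftZ A f * liftZ A g.
Proof. by rewrite /liftZ rmorphM. Qed.
Lemma liftZX f k : liftZ A (f ^+ k) = liftZ A f ^+ k.
Proof. by rewrite /liftZ rmorphXn. Qed.
Lemma liftZD f g : liftZ A (f + g) = liftZ A f + liftZ A g.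
Proof. by rewrite /liftZ rmorphD. Qed.
Lemma liftZn k : liftZ A k%:R = k%:R.
Proof. by rewrite /liftZ rmorph_nat. Qed.

Lemma PhiStar_list (s : seq nat) : (forall m, m \in s -> S m) -> PhiStar S (\prod_(m <- s) 'Phi_m).
Proof. by move=> h; exists s. Qed.

Lemma compat F G h : PhiStar S F -> PhiStar S G -> F = h * G ->
  exists u, Zd F - Zd G = liftZ A G * u.
Proof.
move=> hF hG e.
have [u1 E1] := (eqmodE _ _ _).1 (Hx hG hF (ex_intro _ h e)).
have [u2 E2] := (eqmodE _ _ _).1 (Hy hG hF (ex_intro _ h e)).
exists (u1 - u2); rewrite mulrBr -E1 -E2 /Zd.
ring.
Qed.

Lemma prod_nseq e n : \prod_(m <- nseq e n) 'Phi_m = 'Phi_n ^+ e.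
Proof. by elim: e => [|e IH]; rewrite ?big_nil ?expr0 // big_cons IH exprS. Qed.

Lemma trivA_good f : (forall a : A, a = 0) -> Good f.
Proof.
move=> h; exists 0; rewrite mulr0 /Zd.
have E : forall s : seq A, iotaA s = 0.
  move=> s; apply/polyP => k; rewrite coef_iotaA coef0; apply: tx_eq => //=; exact: h.
by rewrite !E subrr.
Qed.

Lemma KeyStep (gs : seq nat) n n' :
  (forall m, m \in gs -> S m) -> S n -> S n' -> equivA A n' n ->
  (forall M, Good (\prod_(m <- gs) 'Phi_m * 'Phi_n' ^+ M)) ->
  forall e, Good (\prod_(m <- gs) 'Phi_m * 'Phi_n ^+ e).
Proof.
move=> hgs hn hn' heq hG e.
case: heq => [<- | [htriv | [p [k [pp [sepA hpk]]]]]]; first exact: hG.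
  exact: trivA_good.
set g := \prod_(m <- gs) 'Phi_m.
have inS : forall a b, PhiStar S (g * 'Phi_n ^+ a * 'Phi_n' ^+ b).
  move=> a b; rewrite /g -!prod_nseq -!big_cat; apply: PhiStar_list => m.
  rewrite !mem_cat => /orP [/orP [h | /nseqP [-> _]] | /nseqP [-> _]] //; exact: hgs.
have inS1 : forall a, PhiStar S (g * 'Phi_n ^+ a).
  by move=> a; have := inS a 0%N; rewrite expr0 mulr1.
have inS2 : forall b, PhiStar S (g * 'Phi_n' ^+ b).
  by move=> b; have := inS 0%N b; rewrite expr0 mulr1.
have mon : (g * 'Phi_n ^+ e) \is monic.
  by rewrite monicMr ?monic_exp ?Cyclotomic_monic // /g monic_prod // => i _; apply: Cyclotomic_monic.
suff [u Hu] : exists u, Zd (g * 'Phi_n ^+ e) = u * liftZ A (g * 'Phi_n ^+ e).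
  by exists u; rewrite Hu mulrC.
apply: (@sep_rem A p (prime_gt1 pp) sepA); first exact: monic_map.
move=> j.
have [M [s [t EM]]] := KeyNT pp (HSpos hn) (HSpos hn') (proj1 (or_comm _ _) hpk) e j.
have [a Ea] := hG M.
have [b Eb] := compat (inS e M) (inS2 M) (h := 'Phi_n ^+ e) (ltac:(rewrite /g; ring)).
have [d Ed] := compat (inS e M) (inS1 e) (h := 'Phi_n' ^+ M) (ltac:(rewrite /g; ring)).
have eG : liftZ A (g * 'Phi_n' ^+ M) = liftZ A g * (liftZ A s * liftZ A ('Phi_n ^+ e) + liftZ A t * (p ^ j)%N%:R).
  by rewrite liftZM EM liftZD !liftZM liftZn.
have ef : liftZ A (g * 'Phi_n ^+ e) = liftZ A g * liftZ A ('Phi_n ^+ e) by rewrite liftZM.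
exists (liftZ A s * (a + b) - d), (liftZ A g * liftZ A t * (a + b)).
have -> : Zd (g * 'Phi_n ^+ e) = Zd (g * 'Phi_n ^+ e * 'Phi_n' ^+ M) - liftZ A (g * 'Phi_n ^+ e) * d.
  by rewrite -Ed; ring.
have -> : Zd (g * 'Phi_n ^+ e * 'Phi_n' ^+ M) = Zd (g * 'Phi_n' ^+ M) + liftZ A (g * 'Phi_n' ^+ M) * b.
  by rewrite -Eb; ring.
rewrite Ea eG ef.
ring.
Qed.

Hypothesis Hchain : chain_condition A S S'.
Hypothesis Hxy : forall g, PhiStar S' g -> polyA_eqmod g (x g) (y g).

Lemma outer (s : seq nat) : (forall m, m \in s -> S m) ->
  forall u, (forall m, m \in u -> S' m) -> Good (\prod_(m <- u ++ s) 'Phi_m).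
Proof.
elim: s => [|n s' IH] hs u hu.
  rewrite cats0; have hP : PhiStar S' (\prod_(m <- u) 'Phi_m) by exists u.
  have [w Hw] := (eqmodE _ _ _).1 (Hxy hP); by exists w.
have hn : S n by apply: hs; rewrite mem_head.
have hs' : forall m, m \in s' -> S m by move=> m hm; apply: hs; rewrite in_cons hm orbT.
have [r [c [c0 cr cS ceq]]] := Hchain hn.
have inner : forall i, (i <= r)%N -> forall u0, (forall m, m \in u0 -> S' m) ->
    forall e, Good (\prod_(m <- u0 ++ s') 'Phi_m * 'Phi_(c i) ^+ e).
  elim => [|i IHi] hi u0 hu0 e.
    have := IH hs' (u0 ++ nseq e (c 0%N)).
    rewrite -catA !big_cat /= prod_nseq (mulrC ('Phi_(c 0%N) ^+ e)) mulrA; apply.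
    by move=> m; rewrite mem_cat => /orP [/hu0 | /nseqP [-> _]].
  apply: (KeyStep (gs := u0 ++ s') (n' := c i)).
  - by move=> m; rewrite mem_cat => /orP [/hu0 /HS'S | /hs'].
  - exact: cS.
  - by apply: cS; apply: ltnW.
  - exact: ceq.
  - by move=> M; apply: IHi => //; apply: ltnW.
have := inner r (leqnn r) u hu 1%N; rewrite cr expr1.
have -> : \prod_(m <- u ++ n :: s') 'Phi_m = \prod_(m <- u ++ s') 'Phi_m * 'Phi_n.
  by rewrite !big_cat big_cons /=; ring.
done.
Qed.

Lemma main_good f : PhiStar S f -> polyA_eqmod f (x f) (y f).
Proof.
move=> [s [hs ->]]; apply/eqmodE.
have := outer hs (u := [::]) (ltac:(by [])); by [].
Qed.
End Main.

Unset Implicit Arguments.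

Theorem theorem7p6 (A : zmodType) (S S' : nat -> Prop)
    (HSpos : forall n, S n -> (0 < n)%N)
    (HS'S : forall n, S' n -> S n)
    (Hchain : chain_condition A S S')
    (x y : {poly int} -> seq A)
    (Hx : limit_elt S x) (Hy : limit_elt S y)
    (Hxy : forall g, PhiStar S' g -> polyA_eqmod g (x g) (y g)) :
  forall f, PhiStar S f -> polyA_eqmod f (x f) (y f).
Proof. exact: (main_good HSpos HS'S Hx Hy Hchain Hxy). Qed.
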